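(* Let $P_1,\dots,P_n\subset\mathbb{R}^d$ be convex polytopes each containing the origin, let $\mu\in\mathbb{R}^d$, and let $\Delta=\Delta(\mathcal{P};\mu)$. Let $\sigma,\tau\in\Delta$ be faces with $\sigma\cup\tau\in\Delta$. Then for any line $\ell$ through $\mu$, the sets $P_\sigma\cap\ell$ and $P_\tau\cap\ell$ lie on the same side of $\mu$, i.e. they are contained in the same connected component of $\ell\setminus\{\mu\}$.
   Context: For $\sigma\subseteq[n]$ write $P_\sigma=\sum_{i\in\sigma}P_i$ (Minkowski sum), with $P_\emptyset=\{0\}$; the Minkowski complex $\Delta(\mathcal{P};\mu)$ is the simplicial complex on vertex set $[n]$ whose faces are the $\sigma\subseteq[n]$ with $\mu\notin P_\sigma$. *)

(* Defs.v *)
From HB Require Import structures.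
From mathcomp Require Import all_boot all_order all_algebra.
From mathcomp Require Import reals.
Set Implicit Arguments. Unset Strict Implicit. Unset Printing Implicit Defensive.
Import Order.TTheory GRing.Theory Num.Theory.
Local Open Scope ring_scope.

Definition in_conv (R : realType) (d : nat) (s : seq 'rV[R]_d) (x : 'rV[R]_d) : Prop :=
  exists w : 'I_(size s) -> R,
    (forall i, 0 <= w i) /\ \sum_i w i = 1 /\ x = \sum_i w i *: s`_(val i).

Definition msum (R : realType) (d n : nat) (P : 'I_n -> 'rV[R]_d -> Prop)
  (sigma : {set 'I_n}) (x : 'rV[R]_d) : Prop :=
  exists f : 'I_n -> 'rV[R]_d,
    (forall i, i \in sigma -> P i (f i)) /\ x = \sum_(i in sigma) f i.

(* sigma is a face of the Minkowski complex Delta(P; mu) iff mu \notin P_sigma. *)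
Definition mink_face (R : realType) (d n : nat) (P : 'I_n -> 'rV[R]_d -> Prop)
  (mu : 'rV[R]_d) (sigma : {set 'I_n}) : Prop := ~ msum P sigma mu.

(* For the line l = {mu + t v | t in R} (v <> 0), the two connected components
   of l \ {mu} are {mu + t v | t > 0} and {mu + t v | t < 0}. *)
Definition same_side_on_line (R : realType) (d : nat) (mu v : 'rV[R]_d)
  (A B : 'rV[R]_d -> Prop) : Prop :=
  ((forall t : R, A (mu + t *: v) -> 0 < t) /\ (forall t : R, B (mu + t *: v) -> 0 < t))
  \/
  ((forall t : R, A (mu + t *: v) -> t < 0) /\ (forall t : R, B (mu + t *: v) -> t < 0)).

(* Main.v *)
Require Import Defs.
From HB Require Import structures.
From mathcomp Require Import all_boot all_order all_algebra.
From mathcomp Require Import reals.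
From mathcomp Require Import ring.
From Stdlib Require Import Classical.
Import Order.TTheory GRing.Theory Num.Theory.
Local Open Scope ring_scope.

Lemma conv_convex (R : realType) (d : nat) (s : seq 'rV[R]_d) x y (l : R) :
  0 <= l -> l <= 1 -> in_conv s x -> in_conv s y -> in_conv s ((1 - l) *: x + l *: y).
Proof.
move=> l0 l1 [w1 [w1p [w1s ->]]] [w2 [w2p [w2s ->]]].
exists (fun i => (1 - l) * w1 i + l * w2 i); split; [|split].
- move=> i; apply: addr_ge0; apply: mulr_ge0 => //; by rewrite subr_ge0.
- by rewrite big_split /= -!mulr_sumr w1s w2s !mulr1 subrK.
- rewrite !scaler_sumr -big_split /=; apply: eq_bigr => i _.
  by rewrite !scalerA -scalerDl.
Qed.

Lemma msum_convex (R : realType) (d n : nat) (V : 'I_n -> seq 'rV[R]_d) rho x y  (l : R) :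
  0 <= l -> l <= 1 -> msum (fun i => in_conv (V i)) rho x ->
  msum (fun i => in_conv (V i)) rho y ->
  msum (fun i => in_conv (V i)) rho ((1 - l) *: x + l *: y).
Proof.
move=> l0 l1 [f1 [f1p ->]] [f2 [f2p ->]].
exists (fun i => (1 - l) *: f1 i + l *: f2 i); split.
- by move=> i hi; apply: conv_convex => //; [apply: f1p | apply: f2p].
- by rewrite big_split /= !scaler_sumr.
Qed.

Lemma msum_mono (R : realType) (d n : nat) (V : 'I_n -> seq 'rV[R]_d)
  (h0 : forall i, in_conv (V i) 0) (sigma rho : {set 'I_n}) x :
  sigma \subset rho -> msum (fun i => in_conv (V i)) sigma x ->
  msum (fun i => in_conv (V i)) rho x.
Proof.
move=> Hsub [f [fp ->]].
exists (fun i => if i \in sigma then f i else 0); split.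
- by move=> i _; case: ifP => // /fp.
- rewrite [RHS](big_setID sigma) /= (setIidPr Hsub) [X in _ = _ + X]big1 ?addr0.
  + by apply: eq_bigr => i ->.
  + by move=> i; rewrite in_setD => /andP [/negbTE -> _].
Qed.

Theorem lemma5 (R : realType) (d n : nat) (V : 'I_n -> seq 'rV[R]_d)
  (h0 : forall i, in_conv (V i) 0) (mu : 'rV[R]_d)
  (sigma tau : {set 'I_n})
  (hs : mink_face (fun i => in_conv (V i)) mu sigma)
  (ht : mink_face (fun i => in_conv (V i)) mu tau)
  (hst : mink_face (fun i => in_conv (V i)) mu (sigma :|: tau))
  (v : 'rV[R]_d) (hv : v != 0) :
  same_side_on_line mu v (msum (fun i => in_conv (V i)) sigma)
                         (msum (fun i => in_conv (V i)) tau).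
Proof.
set Q := fun t => msum (fun i => in_conv (V i)) (sigma :|: tau) (mu + t *: v).
have Q0 : ~ Q 0 by rewrite /Q scale0r addr0.
have Qab : forall a b, Q a -> Q b -> 0 < a -> b < 0 -> False.
  move=> a b Qa Qb a0 b0; apply: hst.
  have ab : 0 < a - b by rewrite subr_gt0 (lt_trans b0 a0).
  have := @msum_convex R d n V (sigma :|: tau) _ _ (a / (a - b)) _ _ Qa Qb.
  have -> : (1 - a / (a - b)) *: (mu + a *: v) + a / (a - b) *: (mu + b *: v) = mu.
    rewrite !scalerDr !scalerA addrACA -scalerDl subrK scale1r -scalerDl.
    have -> : (1 - a / (a - b)) * a + a / (a - b) * b = 0.
      by field; rewrite lt0r_neq0.
    by rewrite scale0r addr0.
  apply.
  - by apply: divr_ge0; [apply: ltW|apply: ltW].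
  - by rewrite ler_pdivrMr // mul1r lerDl oppr_ge0 ltW.
have QA : forall t, msum (fun i => in_conv (V i)) sigma (mu + t *: v) -> Q t.
  by move=> t; apply: msum_mono => //; apply: subsetUl.
have QB : forall t, msum (fun i => in_conv (V i)) tau (mu + t *: v) -> Q t.
  by move=> t; apply: msum_mono => //; apply: subsetUr.
have Qneg : forall b, Q b -> b < 0 -> forall t, Q t -> t < 0.
  move=> b Qb b0 t Qt; case: (ltgtP t 0) => // [t0|t0].
  - by exfalso; apply: (Qab t b).
  - by exfalso; apply: Q0; rewrite -t0.
case: (classic (exists b, Q b /\ b < 0)) => [[b [Qb b0]]|H].
- right; split=> t Ht; [apply: (Qneg b) => //; exact: QA | apply: (Qneg b) => //; exact: QB].
- have Qpos : forall t, Q t -> 0 < t.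
    move=> t Qt; case: (ltgtP t 0) => // [t0|t0].
    + by exfalso; apply: H; exists t.
    + by exfalso; apply: Q0; rewrite -t0.
  by left; split=> t Ht; apply: Qpos; [exact: QA | exact: QB].
Qed.
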